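(* For any odd prime $p$ and any positive integer $r$, $$p^rH_{p^r-1}(1)\equiv pH_{p-1}(1),\qquad p^{2r}H_{p^r-1}(1,1)\equiv p^2H_{p-1}(1,1),\qquad p^{3r}H_{p^r-1}(1,1,1)\equiv p^3H_{p-1}(1,1,1)\pmod{p^4}.$$
   Context: For positive integers $s_1,\dots,s_m$ and an integer $n\ge0$, $H_n(s_1,\dots,s_m)=\sum_{1\le k_1<\cdots<k_m\le n}\frac{1}{k_1^{s_1}\cdots k_m^{s_m}}$. A congruence $a\equiv b\pmod{p^m}$ between rational numbers means that $(a-b)/p^m$ is a rational number whose denominator is not divisible by $p$. *)

(* Defs.v *)
From mathcomp Require Import all_boot all_order all_algebra.
Set Implicit Arguments. Unset Strict Implicit. Unset Printing Implicit Defensive.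
Import Order.TTheory GRing.Theory Num.Theory.
Local Open Scope ring_scope.

(* An index tuple is a function
   k : 'I_m -> 'I_n, with the actual integer k_i being (k i).+1. *)
Definition mhs (n : nat) (s : seq nat) : rat :=
  \sum_(k : {ffun 'I_(size s) -> 'I_n}
         | [forall i : 'I_(size s), forall j : 'I_(size s),
              (i < j)%N ==> (k i < k j)%N])
    \prod_(i : 'I_(size s)) ((((k i).+1 ^ (nth 0%N s i))%N)%:R)^-1.

Definition ratcong (p m : nat) (a b : rat) : Prop :=
  ~~ (p %| `|denq ((a - b) / (p ^ m)%:R)|)%N.

(* Main.v *)
Require Import Defs.
From mathcomp Require Import all_boot all_order all_algebra.
From mathcomp Require Import zify ring lra.
Local Open Scope ring_scope.

Set Implicit Arguments. Unset Strict Implicit. Unset Printing Implicit Defensive.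
Import Order.TTheory GRing.Theory Num.Theory.
Local Open Scope ring_scope.

Section Pint.
Variable p : nat.
Hypothesis pP : prime p.

Definition pint (q : rat) := exists b : nat, ~~ (p %| b)%N /\ q * b%:R \is a Num.int.

Lemma pint_den q : pint q -> ~~ (p %| `|denq q|)%N.
Proof.
case=> b [pb /intrP [z hz]].
apply: contra pb => pd.
have e : (numq q * b%:Z = z * denq q)%R.
  apply: (@intr_inj rat).
  by rewrite !rmorphM /= numqE -hz /= -mulrA [_ * (b%:Z)%:~R]mulrC mulrA.
have : (`|denq q| %| `|numq q| * b)%N.
  have := congr1 absz e; rewrite !abszM /= => ->; exact: dvdn_mull.
rewrite Gauss_dvdr; last by rewrite coprime_sym coprime_num_den.
by move=> h; apply: dvdn_trans h.
Qed.

Lemma pint_nat n : pint n%:R.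
Proof. by exists 1%N; rewrite dvdn1 mulr1 rpred_nat; case: (p) pP => [|[|]]. Qed.

Lemma pint_add a b : pint a -> pint b -> pint (a + b).
Proof.
case=> x [px hx] [y [py hy]]; exists (x * y)%N; split.
  by rewrite Euclid_dvdM // negb_or px.
have -> : (a + b) * (x * y)%N%:R = (a * x%:R) * y%:R + (b * y%:R) * x%:R.
  by rewrite natrM; ring.
by rewrite rpredD // rpredM // rpred_nat.
Qed.

Lemma pint_mul a b : pint a -> pint b -> pint (a * b).
Proof.
case=> x [px hx] [y [py hy]]; exists (x * y)%N; split.
  by rewrite Euclid_dvdM // negb_or px.
have -> : (a * b) * (x * y)%N%:R = (a * x%:R) * (b * y%:R).
  by rewrite natrM; ring.
by rewrite rpredM.
Qed.

Lemma pint_opp a : pint a -> pint (- a).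
Proof. by case=> x [px hx]; exists x; rewrite mulNr rpredN. Qed.

Lemma pint_sub a b : pint a -> pint b -> pint (a - b).
Proof. by move=> ha hb; apply: pint_add => //; apply: pint_opp. Qed.

Lemma pint_inv n : ~~ (p %| n)%N -> pint (n%:R)^-1.
Proof.
move=> pn; exists n; split => //.
have n0 : n%:R != 0 :> rat by rewrite pnatr_eq0; apply: contra pn => /eqP ->.
by rewrite mulVf // rpred1.
Qed.

Lemma pint_sum I (r : seq I) (P : pred I) (F : I -> rat) :
  (forall i, P i -> pint (F i)) -> pint (\sum_(i <- r | P i) F i).
Proof.
move=> h; elim/big_rec: _ => [|i x Pi hx]; first exact: (pint_nat 0).
exact: pint_add (h _ Pi) hx.
Qed.

Lemma pint_exp a k : pint a -> pint (a ^+ k).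
Proof.
move=> ha; elim: k => [|k ih]; first exact: (pint_nat 1).
by rewrite exprS; apply: pint_mul.
Qed.

End Pint.

Set Implicit Arguments. Unset Strict Implicit. Unset Printing Implicit Defensive.
Import Order.TTheory GRing.Theory Num.Theory.
Local Open Scope ring_scope.

Definition xx (i : nat) : rat := ((i.+1)%:R)^-1.
Definition PP n k := \sum_(i < n) xx i ^+ k.
Definition E2 n := \sum_(a < n) \sum_(b < n) (if (a < b)%N then xx a * xx b else 0).
Definition E3 n := \sum_(a < n) \sum_(b < n) \sum_(c < n)
   (if (a < b)%N && (b < c)%N then xx a * xx b * xx c else 0).

Lemma PPS n k : PP n.+1 k = PP n k + xx n ^+ k.
Proof. by rewrite /PP big_ord_recr. Qed.

Lemma E2S n : E2 n.+1 = E2 n + PP n 1 * xx n.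
Proof.
rewrite /E2 big_ord_recr /= [X in _ + X]big1 ?addr0; last first.
  move=> b _; rewrite ifF //; apply/negbTE; rewrite -leqNgt -ltnS; exact: ltn_ord.
under eq_bigr => a _ do rewrite big_ord_recr /= ltn_ord.
rewrite big_split /= /PP mulr_suml.
by congr (_ + _); apply: eq_bigr => a _; rewrite expr1.
Qed.

Lemma E3S n : E3 n.+1 = E3 n + E2 n * xx n.
Proof.
rewrite /E3 big_ord_recr /= [X in _ + X]big1 ?addr0; last first.
  move=> b _; apply: big1 => c _.
  rewrite ifF //; apply/negbTE; rewrite negb_and -leqNgt -ltnS ltn_ord //.
have e1 : forall a : 'I_n, \sum_(b < n.+1) \sum_(c < n.+1)
    (if (a < b)%N && (b < c)%N then xx a * xx b * xx c else 0) =
    \sum_(b < n) \sum_(c < n.+1)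
    (if (a < b)%N && (b < c)%N then xx a * xx b * xx c else 0).
  move=> a; rewrite big_ord_recr /= [X in _ + X]big1 ?addr0 //.
  move=> c _; rewrite ifF // (_ : (n < c)%N = false) ?andbF //.
  apply/negbTE; rewrite -leqNgt -ltnS; exact: ltn_ord.
under eq_bigr => a _ do rewrite e1.
under eq_bigr => a _ do under eq_bigr => b _ do rewrite big_ord_recr /= ltn_ord andbT.
under eq_bigr => a _ do rewrite big_split /=.
rewrite big_split /= /E2 mulr_suml.
congr (_ + _); apply: eq_bigr => a _; rewrite mulr_suml; apply: eq_bigr => b _.
by case: ifP; rewrite ?mul0r.
Qed.

Lemma E2P n : E2 n = (PP n 1 ^+ 2 - PP n 2) / 2.
Proof.
elim: n => [|n ih]; first by rewrite /E2 /PP !big_ord0 expr0n /= subrr mul0r.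
rewrite E2S ih !PPS; by field.
Qed.

Lemma E3P n : E3 n = (PP n 1 ^+ 3 - 3 * PP n 1 * PP n 2 + 2 * PP n 3) / 6.
Proof.
elim: n => [|n ih]; first by rewrite /E3 /PP !big_ord0 expr0n /= !mulr0 mul0r.
rewrite E3S ih E2P !PPS; by field.
Qed.

Set Implicit Arguments. Unset Strict Implicit. Unset Printing Implicit Defensive.
Import Order.TTheory GRing.Theory Num.Theory.
Local Open Scope ring_scope.

Definition h1 n (a : 'I_n) : {ffun 'I_1 -> 'I_n} := [ffun _ => a].
Definition h2 n (t : 'I_n * 'I_n) : {ffun 'I_2 -> 'I_n} :=
  [ffun i : 'I_2 => if nat_of_ord i == 0%N then t.1 else t.2].
Definition h3 n (t : 'I_n * ('I_n * 'I_n)) : {ffun 'I_3 -> 'I_n} :=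
  [ffun i : 'I_3 => if nat_of_ord i == 0%N then t.1 else if nat_of_ord i == 1%N then t.2.1 else t.2.2].

Lemma h1_bij n : bijective (@h1 n).
Proof.
exists (fun f : {ffun 'I_1 -> 'I_n} => f ord0); first by move=> a; rewrite ffunE.
move=> f; apply/ffunP => i; rewrite ffunE; congr (f _); apply: val_inj.
by case: i => -[|m] Hm.
Qed.

Lemma h2_bij n : bijective (@h2 n).
Proof.
exists (fun f : {ffun 'I_2 -> 'I_n} => (f ord0, f ord_max)); first by case=> a b; rewrite !ffunE.
move=> f; apply/ffunP => i; rewrite ffunE.
have := ltn_ord i; case: i => -[|[|m]] Hm /= Hm'.
- by congr (f _); apply: val_inj.
- by congr (f _); apply: val_inj.
- by [].
Qed.

Lemma h3_bij n : bijective (@h3 n).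
Proof.
exists (fun f : {ffun 'I_3 -> 'I_n} => (f ord0, (f (Ordinal (isT : (1 < 3)%N)), f ord_max))).
  by case=> a [b c]; rewrite !ffunE.
move=> f; apply/ffunP => i; rewrite ffunE.
have := ltn_ord i; case: i => -[|[|[|m]]] Hm /= Hm'.
- by congr (f _); apply: val_inj.
- by congr (f _); apply: val_inj.
- by congr (f _); apply: val_inj.
- by [].
Qed.

Lemma mhs1 n : mhs n [:: 1%N] = PP n 1.
Proof.
rewrite /mhs (reindex (@h1 n)) /=; last exact: onW_bij (h1_bij n).
rewrite /PP; apply: eq_big => [a|a _].
  apply/forallP => i; apply/forallP => j; apply/implyP.
  by have := ltn_ord i; have := ltn_ord j; lia.
by rewrite big_ord_recr big_ord0 /= ffunE mul1r expn1 expr1.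
Qed.

Lemma mhs2 n : mhs n [:: 1%N; 1%N] = E2 n.
Proof.
rewrite /mhs (reindex (@h2 n)) /=; last exact: onW_bij (h2_bij n).
rewrite /E2 pair_big big_mkcond /=; apply: eq_bigr => -[a b] _ /=.
have -> : [forall i : 'I_2, forall j : 'I_2, (i < j)%N ==> (h2 (a, b) i < h2 (a, b) j)%N]
   = (a < b)%N.
  apply/forallP/idP => [h | ab i].
    by have := forallP (h ord0) ord_max; rewrite !ffunE.
  apply/forallP => j; apply/implyP => ij; rewrite !ffunE.
  have [-> ->] : nat_of_ord i = 0%N /\ nat_of_ord j = 1%N.
    by have := ltn_ord i; have := ltn_ord j; lia.
  by [].
case: ifP => // _.
by rewrite !big_ord_recr big_ord0 /= !ffunE /= mul1r !expn1.
Qed.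

Lemma pair_big3 n (F : 'I_n -> 'I_n -> 'I_n -> rat) :
  \sum_(a < n) \sum_(b < n) \sum_(c < n) F a b c =
  \sum_(t : 'I_n * ('I_n * 'I_n)) F t.1 t.2.1 t.2.2.
Proof.
transitivity (\sum_(a < n) \sum_(t : 'I_n * 'I_n) F a t.1 t.2).
  by apply: eq_bigr => a _; rewrite pair_big.
by rewrite pair_big.
Qed.

Lemma mhs3 n : mhs n [:: 1%N; 1%N; 1%N] = E3 n.
Proof.
rewrite /mhs (reindex (@h3 n)) /=; last exact: onW_bij (h3_bij n).
rewrite /E3 pair_big3 big_mkcond /=; apply: eq_bigr => -[a [b c]] _ /=.
have -> : [forall i : 'I_3, forall j : 'I_3,
    (i < j)%N ==> (h3 (a, (b, c)) i < h3 (a, (b, c)) j)%N]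
   = (a < b)%N && (b < c)%N.
  apply/forallP/idP => [h | /andP[ab bc] i].
    have := forallP (h ord0) (Ordinal (isT : (1 < 3)%N)).
    have := forallP (h (Ordinal (isT : (1 < 3)%N))) ord_max.
    by rewrite !ffunE /= => -> ->.
  apply/forallP => j; apply/implyP => ij; rewrite !ffunE.
  have : (nat_of_ord i = 0%N /\ nat_of_ord j = 1%N) \/ (nat_of_ord i = 0%N /\ nat_of_ord j = 2%N)
          \/ (nat_of_ord i = 1%N /\ nat_of_ord j = 2%N).
    by have := ltn_ord i; have := ltn_ord j; lia.
  by case=> [|[|]] [-> ->] //=; apply: ltn_trans bc.
case: ifP => // _.
by rewrite !big_ord_recr big_ord0 /= !ffunE /= mul1r !expn1.
Qed.

Set Implicit Arguments. Unset Strict Implicit. Unset Printing Implicit Defensive.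
Import Order.TTheory GRing.Theory Num.Theory.
Local Open Scope ring_scope.

Lemma PP_sum (M k : nat) : (0 < M)%N ->
  (M%:R)^+k * PP M.-1 k = \sum_(1 <= i < M) (M%:R / i%:R : rat) ^+ k.
Proof.
move=> M0; rewrite big_add1 big_mkord /PP mulr_sumr.
by apply: eq_bigr => i _; rewrite /xx -exprMn.
Qed.

Lemma filter_mult c d : (0 < c)%N ->
  [seq i <- index_iota 1 (c * d) | c %| i]%N = [seq (c * m)%N | m <- index_iota 1 d].
Proof.
move=> c0; apply: (irr_sorted_eq ltn_trans ltnn).
- by apply: sorted_filter; [exact: ltn_trans | exact: iota_ltn_sorted].
- apply: (homo_sorted (e := ltn)); last exact: iota_ltn_sorted.
  by move=> x y; rewrite ltn_pmul2l.
move=> i; rewrite mem_filter mem_index_iota; apply/idP/mapP.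
  case/andP => /dvdnP [m ->] /andP[h1 h2]; exists m; last by rewrite mulnC.
  rewrite mem_index_iota; apply/andP; split.
    by move: h1; rewrite muln_gt0 => /andP[].
  by move: h2; rewrite mulnC ltn_pmul2l.
case=> m; rewrite mem_index_iota => /andP[h1 h2] ->.
by rewrite dvdn_mulr // muln_gt0 c0 h1 ltn_pmul2l.
Qed.

Lemma sum_mult (F : nat -> rat) c d : (0 < c)%N ->
  \sum_(1 <= i < c * d | (c %| i)%N) F i = \sum_(1 <= m < d) F (c * m)%N.
Proof.
move=> c0; rewrite -big_filter filter_mult // big_map //.
Qed.

Set Implicit Arguments. Unset Strict Implicit. Unset Printing Implicit Defensive.
Import Order.TTheory GRing.Theory Num.Theory.
Local Open Scope ring_scope.

Definition yy p e i : rat := (p ^ e)%N%:R / i%:R.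

Lemma key p r i : prime p -> (0 < i)%N -> ~~ (p ^ r.-1 %| i)%N ->
  (2 <= r)%N /\ pint p (yy p (r - 2) i).
Proof.
move=> pP i0 nd.
have r2 : (2 <= r)%N.
  by move: nd; case: r => [|[|r]] //=; rewrite expn0 dvd1n.
split => //.
have [m cpm ie] := pfactor_coprime pP i0.
set j := logn p i in ie.
have jr : (j <= r - 2)%N.
  rewrite leqNgt; apply/negP => h; move/negP: nd; apply.
  rewrite ie; apply: dvdn_mull; apply: dvdn_exp2l.
  move: h r2; case: (r) => // r'; rewrite /=; lia.
have m0 : (0 < m)%N by move: i0; rewrite ie muln_gt0 => /andP[].
have p0 : (0 < p)%N by exact: prime_gt0.
have -> : yy p (r - 2) i = (p ^ (r - 2 - j))%N%:R * (m%:R)^-1.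
  have hm : m%:R != 0 :> rat by rewrite pnatr_eq0 -lt0n.
  have hj : (p ^ j)%N%:R != 0 :> rat by rewrite pnatr_eq0 -lt0n expn_gt0 p0.
  rewrite /yy ie -{1}(subnK jr) expnD !natrM; field; by rewrite hm hj.
apply: (pint_mul pP); first exact: pint_nat.
by apply: pint_inv; rewrite -prime_coprime.
Qed.

Lemma pint_eq p x y : x = y -> pint p y -> pint p x.
Proof. by move=> ->. Qed.

Section Main.
Variables (p r : nat).
Hypotheses (pP : prime p) (po : odd p) (r0 : (0 < r)%N).

Definition DD k := \sum_(1 <= i < p ^ r | ~~ (p ^ r.-1 %| i)%N) (yy p r i) ^+ k.

Lemma p0 : (0 < p)%N. Proof. exact: prime_gt0. Qed.
Lemma hN : (p ^ r = p ^ r.-1 * p)%N.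
Proof. by rewrite -expnSr prednK. Qed.
Lemma Pn0 : p%:R != 0 :> rat.
Proof. by rewrite pnatr_eq0 -lt0n p0. Qed.

Lemma splitA k : ((p ^ r)%N%:R)^+k * PP (p ^ r).-1 k = (p%:R)^+k * PP p.-1 k + DD k.
Proof.
rewrite !PP_sum ?expn_gt0 ?p0 // (bigID (fun i => p ^ r.-1 %| i)%N) /=.
congr (_ + _).
rewrite hN sum_mult ?expn_gt0 ?p0 // [LHS]big_nat_cond [RHS]big_nat_cond.
apply: eq_bigr => m /andP[/andP[m1 _] _].
have hm : m%:R != 0 :> rat by rewrite pnatr_eq0 -lt0n.
have hc : (p ^ r.-1)%N%:R != 0 :> rat by rewrite pnatr_eq0 -lt0n expn_gt0 p0.
rewrite !natrM; congr (_ ^+ _); field; by rewrite ?hc ?hm ?Pn0.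
Qed.

Lemma yy_shift i : (2 <= r)%N ->
  yy p r i = (p%:R)^+2 * yy p (r - 2) i.
Proof.
move=> r2; rewrite /yy -{1}(subnKC r2) expnD natrM natrX; ring.
Qed.

Lemma DD_high k : exists2 d, pint p d & DD k = (p%:R)^+(2 * k) * d.
Proof.
exists (\sum_(1 <= i < p ^ r | ~~ (p ^ r.-1 %| i)%N) (yy p (r - 2) i) ^+ k).
  rewrite big_nat_cond; apply: (pint_sum pP) => i /andP[/andP[i1 _] nd].
  apply: (pint_exp pP); exact: (proj2 (key pP i1 nd)).
rewrite /DD mulr_sumr [LHS]big_nat_cond [RHS]big_nat_cond.
apply: eq_bigr => i /andP[/andP[i1 _] nd].
have [r2 _] := key pP i1 nd.
by rewrite yy_shift // exprMn -exprM.
Qed.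

Lemma p_ndvd2 : ~~ (p %| 2)%N.
Proof.
apply/negP => /(@dvdn_leq _ 2 isT) h; have := prime_gt1 pP.
have : p = 2%N \/ (p <= 1)%N by lia.
by case=> [e|h1 h2]; [move: po; rewrite e | move: h1; rewrite leqNgt h2].
Qed.

Lemma DD1 : exists2 e, pint p e & DD 1 = (p%:R)^+4 * e.
Proof.
set S := \sum_(1 <= i < p ^ r | ~~ (p ^ r.-1 %| i)%N)
           (yy p (r - 2) i * yy p (r - 2) (p ^ r - i)).
have cN : (p ^ r.-1 %| p ^ r)%N by apply: dvdn_exp2l; exact: leq_pred.
have rev : DD 1 = \sum_(1 <= i < p ^ r | ~~ (p ^ r.-1 %| i)%N) yy p r (p ^ r - i).
  rewrite /DD big_nat_rev /=.
  under eq_bigl => i do rewrite add1n subSS.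
  under eq_bigr => i _ do rewrite add1n subSS expr1.
  rewrite [LHS]big_nat_cond [RHS]big_nat_cond; apply: eq_bigl => i.
  case: (boolP (1 <= i < p ^ r)%N) => //= /andP[h1 h2].
  by rewrite dvdn_subr ?(ltnW h2).
have h2D : 2 * DD 1 = (p%:R)^+4 * S.
  have -> : 2 * DD 1 = DD 1 + DD 1 by ring.
  rewrite {2}rev /DD -big_split /= /S mulr_sumr.
  rewrite [LHS]big_nat_cond [RHS]big_nat_cond.
  apply: eq_bigr => i /andP[/andP[i1 i2] nd].
  have [r2 _] := key pP i1 nd.
  have hr : (p ^ r)%N%:R = (p%:R)^+2 * (p ^ (r - 2))%N%:R :> rat.
    by rewrite -natrX -natrM -expnD subnKC.
  have hI : i%:R != 0 :> rat by rewrite pnatr_eq0 -lt0n.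
  have hD : (p ^ r)%N%:R - i%:R != 0 :> rat.
    by rewrite -natrB ?(ltnW i2) // pnatr_eq0 subn_eq0 -ltnNge.
  have hQ : (p ^ (r - 2))%N%:R != 0 :> rat by rewrite pnatr_eq0 -lt0n expn_gt0 p0.
  rewrite expr1 /yy natrB ?(ltnW i2) // hr; rewrite hr in hD.
  field; by rewrite ?hI ?hD ?hQ ?Pn0.
exists (S / 2).
  apply: (pint_mul pP); last exact: pint_inv p_ndvd2.
  rewrite /S big_nat_cond; apply: (pint_sum pP) => i /andP[/andP[i1 i2] nd].
  apply: (pint_mul pP); first exact: (proj2 (key pP i1 nd)).
  have := key (r := r) pP (i := p ^ r - i); rewrite subn_gt0 i2 dvdn_subr ?(ltnW i2) //.
  by case=> // nd'.
have -> : DD 1 = (2 * DD 1) / 2 by field.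
by rewrite h2D; field.
Qed.

End Main.

Set Implicit Arguments. Unset Strict Implicit. Unset Printing Implicit Defensive.
Import Order.TTheory GRing.Theory Num.Theory.
Local Open Scope ring_scope.

Lemma pint_PP p k : prime p -> pint p (PP p.-1 k).
Proof.
move=> pP; apply: (pint_sum pP) => i _; apply: (pint_exp pP).
apply: pint_inv; rewrite gtnNdvd //.
have := ltn_ord i; have := prime_gt1 pP; lia.
Qed.

Lemma pint_p6 p : prime p -> odd p -> pint p (p%:R / 6).
Proof.
move=> pP po.
have [->|p3] := eqVneq p 3%N.
  have -> : (3%:R / 6 : rat) = (2%:R)^-1 by field.
  by apply: pint_inv.
apply: (pint_mul pP); first exact: pint_nat.
apply: pint_inv; rewrite (_ : 6 = 2 * 3)%N // Euclid_dvdM // negb_or.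
by rewrite (@p_ndvd2 p 1%N pP po isT) dvdn_prime2.
Qed.

Unset Implicit Arguments.
Set Strict Implicit.
Set Printing Implicit Defensive.

Theorem lemma3p1 (p r : nat) :
  prime p -> odd p -> (0 < r)%N ->
  [/\ ratcong p 4 ((p ^ r)%N%:R * mhs (p ^ r).-1 [:: 1%N])
                  (p%:R * mhs p.-1 [:: 1%N]),
      ratcong p 4 ((p ^ (2 * r))%N%:R * mhs (p ^ r).-1 [:: 1%N; 1%N])
                  ((p ^ 2)%N%:R * mhs p.-1 [:: 1%N; 1%N])
    & ratcong p 4 ((p ^ (3 * r))%N%:R * mhs (p ^ r).-1 [:: 1%N; 1%N; 1%N])
                  ((p ^ 3)%N%:R * mhs p.-1 [:: 1%N; 1%N; 1%N])].
Proof.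
move=> pP po r0.
have hP := Pn0 pP.
set P : rat := p%:R.
set Nq : rat := (p ^ r)%N%:R.
have [e he eD] := DD1 pP po r0.
have [d2 hd2 d2D] := DD_high r pP 2.
have [d3 hd3 d3D] := DD_high r pP 3.
have h1 := splitA pP r0 1; rewrite eD !expr1 in h1.
have h2 := splitA pP r0 2; rewrite d2D in h2.
have h3 := splitA pP r0 3; rewrite d3D in h3.
set A1 := PP (p ^ r).-1 1 in h1 *.
set A2 := PP (p ^ r).-1 2 in h2 *.
set A3 := PP (p ^ r).-1 3 in h3 *.
have hu1 := pint_PP 1 pP; have hu2 := pint_PP 2 pP; have hu3 := pint_PP 3 pP.
set u1 := PP p.-1 1 in h1 hu1 *.
set u2 := PP p.-1 2 in h2 hu2 *.
set u3 := PP p.-1 3 in h3 hu3 *.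
have q4 : (p ^ 4)%N%:R = P ^+ 4 by rewrite natrX.
have q2 : (p ^ 2)%N%:R = P ^+ 2 by rewrite natrX.
have q3 : (p ^ 3)%N%:R = P ^+ 3 by rewrite natrX.
have n2 : (p ^ (2 * r))%N%:R = Nq ^+ 2 by rewrite -natrX -expnM mulnC.
have n3 : (p ^ (3 * r))%N%:R = Nq ^+ 3 by rewrite -natrX -expnM mulnC.
have p2 : pint p (2%:R)^-1 := pint_inv (@p_ndvd2 p r pP po r0).
have Mu := pint_mul pP; have Ad := pint_add pP; have Sb := pint_sub pP.
have Ex := pint_exp pP; have hP' : pint p P := pint_nat pP p.
have hn : forall k, pint p k%:R := pint_nat pP.
split; rewrite /ratcong; apply: pint_den; rewrite q4.
- rewrite !mhs1 -/A1 -/u1.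
  apply: (pint_eq (y := e)) => //.
  by rewrite h1; field.
- rewrite !mhs2 !E2P -/A1 -/u1 -/A2 -/u2 n2 q2.
  apply: (pint_eq (y := P * u1 * e + P ^+ 4 * e ^+ 2 / 2 - d2 / 2)).
    have -> : Nq ^+ 2 * ((A1 ^+ 2 - A2) / 2) = ((Nq * A1) ^+ 2 - Nq ^+ 2 * A2) / 2 by ring.
    by rewrite h1 h2; field.
  exact: Sb _ _ (Ad _ _ (Mu _ _ (Mu _ _ hP' hu1) he)
     (Mu _ _ (Mu _ _ (Ex _ 4 hP') (Ex _ 2 he)) p2)) (Mu _ _ hd2 p2).
- rewrite !mhs3 !E3P -/A1 -/u1 -/A2 -/u2 -/A3 -/u3 n3 q3.
  apply: (pint_eq (y := P / 6 * (3%:R * P * u1 ^+ 2 * e + 3%:R * P ^+ 4 * u1 * e ^+ 2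
        + P ^+ 7 * e ^+ 3 - 3%:R * (u1 * d2 + P * e * u2 + P ^+ 3 * e * d2)
        + 2%:R * P * d3))).
    have -> : Nq ^+ 3 * ((A1 ^+ 3 - 3 * A1 * A2 + 2 * A3) / 6) =
      ((Nq * A1) ^+ 3 - 3 * (Nq * A1) * (Nq ^+ 2 * A2) + 2 * (Nq ^+ 3 * A3)) / 6 by ring.
    by rewrite h1 h2 h3; field.
  apply: (pint_mul pP); first exact: pint_p6.
  have T1 := Mu _ _ (Mu _ _ (Mu _ _ (hn 3%N) hP') (Ex _ 2 hu1)) he.
  have T2 := Mu _ _ (Mu _ _ (Mu _ _ (hn 3%N) (Ex _ 4 hP')) hu1) (Ex _ 2 he).
  have T3 := Mu _ _ (Ex _ 7 hP') (Ex _ 3 he).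
  have T4 := Mu _ _ (hn 3%N) (Ad _ _ (Ad _ _ (Mu _ _ hu1 hd2) (Mu _ _ (Mu _ _ hP' he) hu2))
               (Mu _ _ (Mu _ _ (Ex _ 3 hP') he) hd2)).
  have T5 := Mu _ _ (Mu _ _ (hn 2%N) hP') hd3.
  exact: Ad _ _ (Sb _ _ (Ad _ _ (Ad _ _ T1 T2) T3) T4) T5.
Qed.
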